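(* Let $U$ be a finite set, $\mathcal{C}\subseteq 2^U$, and $f:2^U\to\mathbb{R}$ non-decreasing and $\varepsilon$-approximately $\mathcal{C}$-submodular for some $\varepsilon\ge 0$. Let $S\subseteq U$ be a Greedy Maximum Differential Set of $f$ (with ordering $s_1,\dots,s_{|S|}$) with $f(S)=f_{\max}$ and $\delta_{\min}>0$. Let $C\subseteq U$ be a nonempty set with $f(C)=f_{\max}$ whose elements admit an ordering $c_1,\dots,c_{|C|}$ such that $C_i=\{c_1,\dots,c_i\}\in\mathcal{C}$ for every $i=1,\dots,|C|$. Then $$|S|<\Big(1+\frac{\varepsilon}{\delta_{\min}}+\ln\Big(\frac{\delta_{\max}}{\delta_{\min}}\Big)\Big)\cdot|C|+1 .$$
   Context: For $f:2^U\to\mathbb{R}$, $A\subseteq U$, $x\in U$: $\Delta_x f(A)=f(A\cup\{x\})-f(A)$, $f_{\max}=\max_{X\subseteq U}f(X)$. $f$ is non-decreasing if $A\subseteq B\Rightarrow f(A)\le f(B)$. Given $\mathcal{C}\subseteq 2^U$, $f$ is $\varepsilon$-approximately $\mathcal{C}$-submodular if for every $A\subseteq U$, every $B\in\mathcal{C}$ and every $x\in U\setminus B$, $\Delta_x f(A\cup B)\le\Delta_x f(A)+\varepsilon$. A set $S\subseteq U$ is a Greedy Maximum Differential Set of $f$ if its elements can be ordered $s_1,\dots,s_{|S|}$ such that, with $S_0=\emptyset$, $S_i=\{s_1,\dots,s_i\}$, for every $i$: $\Delta_{s_i}f(S_{i-1})\ge\Delta_u f(S_{i-1})$ for all $u\in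 U$. For such $S$: $\delta_{\max}=\Delta_{s_1}f(\emptyset)=\max_{x\in U}\Delta_x f(\emptyset)$ and $\delta_{\min}=\min_{1\le i\le|S|}\Delta_{s_i}f(S_{i-1})$. *)

(* Defs.v *)
From mathcomp Require Import all_boot all_order all_algebra.
From mathcomp Require Import reals exp.
Set Implicit Arguments. Unset Strict Implicit. Unset Printing Implicit Defensive.
Import Order.TTheory GRing.Theory Num.Theory.
Local Open Scope ring_scope.

Section Defs.
Variables (R : realType) (U : finType).

Definition Delta (f : {set U} -> R) (x : U) (A : {set U}) : R :=
  f (x |: A) - f A.

Definition fmax (f : {set U} -> R) : R :=
  \big[Num.max/f set0]_(X : {set U}) f X.

Definition nondecreasing_set (f : {set U} -> R) : Prop :=
  forall A B : {set U}, A \subset B -> f A <= f B.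

Definition approx_submodular (eps : R) (CC : {set {set U}}) (f : {set U} -> R) : Prop :=
  forall (A B : {set U}) (x : U), B \in CC -> x \notin B ->
    Delta f x (A :|: B) <= Delta f x A + eps.

(* s is a greedy ordering s_1,...,s_k of S: distinct elements, S = {s_1..s_k},
   and at each step s_i maximizes Delta_u f(S_{i-1}) over u in U. *)
Definition greedy_ordering (f : {set U} -> R) (S : {set U}) (s : seq U) : Prop :=
  [/\ uniq s, [set x in s] = S &
      forall (p q : seq U) (x : U), s = p ++ x :: q ->
        forall u : U, Delta f u [set y in p] <= Delta f x [set y in p]].

Definition is_GMDS (f : {set U} -> R) (S : {set U}) : Prop :=
  exists s, greedy_ordering f S s.

Fixpoint gains (f : {set U} -> R) (acc : {set U}) (s : seq U) : seq R :=
  match s with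
  | [::] => [::]
  | x :: s' => Delta f x acc :: gains f (x |: acc) s'
  end.

(* delta_min = min_i Delta_{s_i} f(S_{i-1}) (convention: 0 for empty s) *)
Definition delta_min (f : {set U} -> R) (s : seq U) : R :=
  let g := gains f set0 s in \big[Num.min/head 0 g]_(d <- g) d.

Definition delta_max (f : {set U} -> R) : R :=
  \big[Num.max/0]_(x : U) Delta f x set0.

End Defs.

(* Main.v *)
Require Import Defs.
From mathcomp Require Import all_boot all_order all_algebra.
From mathcomp Require Import reals exp.
From mathcomp Require Import sequences ring lra.
Import Order.TTheory GRing.Theory Num.Theory.
Local Open Scope ring_scope.

Lemma size_gains (R : realType) (U : finType) (f : {set U} -> R) A s :
  size (gains f A s) = size s.
Proof. by elim: s A => [|a s IH] A //=; rewrite IH. Qed.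

Lemma gains_nth (R : realType) (U : finType) (f : {set U} -> R) A s i x0 :
  (i < size s)%N ->
  nth 0 (gains f A s) i = Delta f (nth x0 s i) (A :|: [set x in take i s]).
Proof.
elim: s A i => [|a s IH] A [|i] //=.
  by move=> _; rewrite [[set x in [::]]](_ : _ = set0) ?setU0 //; apply/setP=> y; rewrite !inE.
move=> hi; rewrite IH //; congr Delta; apply/setP=> y; rewrite !inE.
by case: (y == a); case: (y \in A).
Qed.

Lemma bigmin_le_mem (R : realType) (g : seq R) x0 d :
  d \in g -> \big[Num.min/x0]_(y <- g) y <= d.
Proof.
elim: g => [|a g IH] //; rewrite in_cons big_cons => /orP [/eqP ->|h].
  by rewrite ge_min lexx.
by rewrite ge_min (IH h) orbT.
Qed.

Lemma bigmax_ge_mem (R : realType) (I : eqType) (l : seq I) (F : I -> R) x0 j :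
  j \in l -> F j <= \big[Num.max/x0]_(y <- l) F y.
Proof.
elim: l => [|a l IH] //; rewrite in_cons big_cons => /orP [/eqP ->|h].
  by rewrite le_max lexx.
by rewrite le_max (IH h) orbT.
Qed.

Lemma key_lemma (R : realType) (U : finType) (CC : {set {set U}})
    (f : {set U} -> R) (eps : R) (c : seq U) (A : {set U}) (G : R) (x0 : U) :
  0 <= eps ->
  approx_submodular eps CC f ->
  uniq c ->
  (forall i : nat, (1 <= i <= size c)%N -> [set x in take i c] \in CC) ->
  (forall u, Delta f u A <= G) ->
  forall n, (n <= size c)%N ->
  f (A :|: [set x in take n c]) - f A <= n%:R * (G + eps).
Proof.
move=> he hsub huniq hCC hG; elim=> [|n IH] hn.
  have -> : [set x in take 0 c] = set0 by apply/setP=> y; rewrite take0 !inE.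
  by rewrite mul0r setU0 subrr.
have hn' : (n < size c)%N := hn.
set x := nth x0 c n.
have hT : [set y in take n.+1 c] = x |: [set y in take n c].
  by apply/setP=> y; rewrite (take_nth x0 hn') !inE mem_rcons in_cons.
have hx : x \notin take n c.
  have hu2 : uniq (take n c ++ drop n c) by rewrite cat_take_drop.
  move: hu2; rewrite cat_uniq => /and3P [_ hd _].
  apply: contra hd => hxt; apply/hasP; exists x => //.
  by rewrite (drop_nth x0 hn') mem_head.
have hD : Delta f x (A :|: [set y in take n c]) <= Delta f x A + eps.
  have [hn0|hn0] := eqVneq n 0%N.
    have -> : [set y in take n c] = set0 by apply/setP=> y; rewrite hn0 take0 !inE.
    by rewrite setU0 lerDl.
  apply: (hsub _ _ x); last by rewrite inE.
  by apply: hCC; rewrite lt0n hn0 /= ltnW.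
have IH' := IH (ltnW hn).
have hGx := hG x.
rewrite hT setUCA -addn1 natrD mulrDl mul1r.
move: IH' hD hGx; rewrite /Delta.
move: (n%:R * (G + eps)) => t.
lra.
Qed.

Lemma lin1 (R : realType) (k i x a m : R) :
  0 <= a -> i < x + 1 -> 0 < m -> k <= i -> k < m + a + x + 1.
Proof. move=> *; lra. Qed.

Lemma lin2 (R : realType) (a r b c e : R) :
  a <= r -> r - c <= b -> b <= e -> a <= c + e.
Proof. move=> *; lra. Qed.

Lemma lin3 (R : realType) (k i x a m : R) :
  k - i <= a + m -> i < x + 1 -> k < m + a + x + 1.
Proof. move=> *; lra. Qed.

Theorem mainTheorem2 (R : realType) (U : finType) (CC : {set {set U}})
    (f : {set U} -> R) (eps : R) (S C : {set U}) (s c : seq U) :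
  0 <= eps ->
  nondecreasing_set f ->
  approx_submodular eps CC f ->
  greedy_ordering f S s ->
  f S = fmax f ->
  0 < delta_min f s ->
  C != set0 ->
  f C = fmax f ->
  uniq c -> [set x in c] = C ->
  (forall i : nat, (1 <= i <= size c)%N -> [set x in take i c] \in CC) ->
  (#|S|%:R : R) <
    (1 + eps / delta_min f s + ln (delta_max f / delta_min f s)) * (#|C|%:R) + 1.
Proof.
move=> he hmono hsub [hus hS hgr] hfS hd0 hC0 hfC huc hC hCC.
case: s hus hS hgr hfS hd0 => [|x0 s'] hus hS hgr hfS hd0.
  by rewrite /delta_min /= big_nil ltxx in hd0.
set s := x0 :: s' in hus hS hgr hfS hd0 *.
set d := delta_min f s in hd0 *.
set dM := delta_max f.
have hkS : #|S| = size s by rewrite -hS cardsE; apply/card_uniqP.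
have hmC : #|C| = size c by rewrite -hC cardsE; apply/card_uniqP.
rewrite hkS hmC.
set k := size s.
set m := size c.
have hm : (0 < m)%N.
  rewrite lt0n; apply: contra hC0 => /eqP /size0nil hc0.
  by apply/eqP; rewrite -hC hc0; apply/setP => y; rewrite !inE.
set P := fun i => [set x in take i s].
set r := fun i => fmax f - f (P i).
set g := fun i => Delta f (nth x0 s i) (P i).
have hPS : forall i, (i < k)%N -> P i.+1 = nth x0 s i |: P i.
  by move=> i hi; apply/setP=> y; rewrite /P (take_nth x0 hi) !inE mem_rcons in_cons.
have hg1 : forall i, (i < k)%N -> r i - r i.+1 = g i.
  by move=> i hi; rewrite /r /g /Delta hPS //; lra.
have hg2 : forall i, (i < k)%N -> d <= g i.
  move=> i hi; rewrite /g /d /delta_min.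
  have := @gains_nth R U f set0 s i x0 hi; rewrite set0U => <-.
  by apply: bigmin_le_mem; apply: mem_nth; rewrite size_gains.
have hg3 : forall i, (i < k)%N -> forall u, Delta f u (P i) <= g i.
  move=> i hi u; apply: (hgr (take i s) (drop i.+1 s)).
  by rewrite -(drop_nth x0 hi) cat_take_drop.
have hrk : r k = 0 by rewrite /r /P take_size hS hfS subrr.
have hmR : 0 < (m%:R : R) by rewrite ltr0n.
have hkey : forall A G, (forall u, Delta f u A <= G) ->
    fmax f - f A <= m%:R * (G + eps).
  move=> A G hG.
  have h1 := @key_lemma R U CC f eps c A G x0 he hsub huc hCC hG m (leqnn m).
  rewrite take_size hC in h1.
  have h2 : fmax f <= f (A :|: C) by rewrite -hfC; apply: hmono; apply: subsetUr.
  move: h1 h2; move: (m%:R * (G + eps)) => t; lra.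
have hP0 : P 0%N = set0 by apply/setP=> y; rewrite /P take0 !inE.
have hdM : forall u, Delta f u (P 0%N) <= dM.
  move=> u; rewrite hP0 /dM /delta_max.
  exact: (@bigmax_ge_mem R U (index_enum U) (fun x => Delta f x set0) 0 u (mem_index_enum u)).
have hq : forall i, (i <= k)%N ->
    r i - m%:R * eps <= (1 - m%:R^-1) ^+ i * (m%:R * dM).
  elim=> [|i IH] hi.
    rewrite expr0 mul1r; have := hkey _ _ hdM; rewrite /r mulrDr.
    move: (m%:R * dM) (m%:R * eps) => a b; lra.
  have hik : (i < k)%N := hi.
  have hr := hkey _ _ (hg3 i hik).
  have hri : m%:R^-1 * r i <= g i + eps by rewrite ler_pdivrMl.
  have e1 : (1 - m%:R^-1) * (r i - m%:R * eps) = r i - m%:R * eps - m%:R^-1 * r i + eps.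
    by field; rewrite gt_eqF.
  have h1m : 0 <= 1 - (m%:R : R)^-1.
    rewrite subr_ge0 -[X in X <= _]mulr1 ler_pdivrMl // mulr1 ler1n //.
  have step : r i.+1 - m%:R * eps <= (1 - m%:R^-1) * (r i - m%:R * eps).
    rewrite e1; have := hg1 i hik; move: hri.
    move: (m%:R^-1 * r i) (m%:R * eps) => a b; lra.
  apply: (le_trans step); rewrite exprS -mulrA; apply: ler_wpM2l => //.
  exact: IH (ltnW hi).
have hlow : forall j, (j <= k)%N -> j%:R * d <= r (k - j)%N.
  elim=> [|j IH] hj; first by rewrite mul0r subn0 hrk.
  have hi : (k - j.+1 < k)%N.
    by rewrite ltn_subrL; apply/andP; split => //; apply: leq_ltn_trans hj.
  have := hg1 _ hi; rewrite subnSK // => e.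
  have := IH (ltnW hj); have := hg2 _ hi.
  have -> : (j.+1%:R : R) = j%:R + 1 by rewrite -addn1 natrD.
  rewrite mulrDl mul1r; move: (j%:R * d) => t; lra.
have hk0 : (0 < k)%N by [].
have hdd : d <= dM.
  apply: (le_trans (hg2 _ hk0)); exact: hdM.
have hdM0 : 0 < dM by apply: lt_le_trans hdd.
set L := ln (dM / d).
have hL : 0 <= L.
  by apply: ln_ge0; rewrite ler_pdivlMr // mul1r.
set x := m%:R * L.
have hx0 : 0 <= x by rewrite mulr_ge0 // ltW.
have exP : exists n : nat, x <= n%:R.
  by exists (Num.truncn x).+1; apply/ltW/truncnS_gt.
case: (ex_minnP exP) => i hi himin.
have hi2 : i%:R < x + 1.
  case: i hi himin => [|i'] hi himin; first by move: hx0; lra.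
  have : ~~ (x <= i'%:R) by apply/negP => /himin; rewrite ltnn.
  rewrite -ltNge -addn1 natrD => h; lra.
have h1m : 0 <= 1 - (m%:R : R)^-1.
  rewrite subr_ge0 -[X in X <= _]mulr1 ler_pdivrMl // mulr1 ler1n //.
have hexp : (1 - (m%:R : R)^-1) ^+ i <= d / dM.
  have a2 : 1 - (m%:R : R)^-1 <= expR (- (m%:R)^-1) by apply: expR_ge1Dx.
  apply: (le_trans (lerXn2r i _ _ a2)); rewrite ?nnegrE ?expR_ge0 //.
  rewrite -expRM_natl.
  have -> : d / dM = expR (- L).
    rewrite expRN lnK ?invf_div // posrE divr_gt0 //.
  rewrite ler_expR mulrN lerN2.
  by rewrite ler_pdivlMr // mulrC.
have E : (1 + eps / d + L) * m%:R + 1 = m%:R + m%:R * (eps / d) + x + 1.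
  by rewrite /x; ring.
rewrite E; clearbody x; clear E.
have het : 0 <= (m%:R : R) * (eps / d) by rewrite mulr_ge0 ?divr_ge0 // ltW.
case: (leqP k i) => hki.
  have : (k%:R : R) <= i%:R by rewrite ler_nat.
  exact: (@lin1 R _ _ _ _ _ het hi2 hmR).
have hl := hlow (k - i)%N (leq_subr _ _).
rewrite subKn in hl; last exact: ltnW hki.
have hqi := hq i (ltnW hki).
have hb : (1 - (m%:R : R)^-1) ^+ i * (m%:R * dM) <= m%:R * d.
  apply: (le_trans (ler_wpM2r _ hexp)); first by rewrite mulr_ge0 // ltW.
  by rewrite mulrCA mulfVK // gt_eqF.
have hki2 : ((k - i)%N%:R : R) <= m%:R * (eps / d) + m%:R.
  have -> : (m%:R : R) * (eps / d) + m%:R = (m%:R * eps + m%:R * d) / d.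
    by field; rewrite gt_eqF.
  rewrite ler_pdivlMr //.
  exact: (@lin2 R _ _ _ _ _ hl hqi hb).
rewrite natrB in hki2; last exact: ltnW hki.
exact: (@lin3 R _ _ _ _ _ hki2 hi2).
Qed.
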